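(* Let $0<\alpha<1$ and let $\varphi$ be a function on $[0,1]$ with $\varphi(s)\ge 0$ for $0\le s\le 1$ (such that the integrals below exist). Define $$s_{n}=\frac{1}{\Gamma(1-\alpha)}\int_{0}^{1}(n+1-s)^{-\alpha}\varphi(s)\,\mathrm{d}s,\qquad n\ge 0.$$ Then for every $k\in\mathbb{N}$ and every $n\ge k$, $(-1)^{k}\nabla^{k}s_{n}\ge 0$.
   Context: Backward differences: $\nabla^{0}s_{n}=s_{n}$ and $\nabla^{k}s_{n}=\nabla^{k-1}s_{n}-\nabla^{k-1}s_{n-1}$ for $k\ge 1$. *)

(* Defs.v *)
From HB Require Import structures.
From mathcomp Require Import all_boot all_order all_algebra.
From mathcomp Require Import all_classical all_reals all_analysis.
Set Implicit Arguments. Unset Strict Implicit. Unset Printing Implicit Defensive.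
Import Order.TTheory GRing.Theory Num.Theory.
Local Open Scope classical_set_scope.
Local Open Scope ring_scope.

Definition Gamma (R : realType) (x : R) : R :=
  fine (\int[@lebesgue_measure R]_(t in `[0%R, +oo[)
          ((t `^ (x - 1)) * expR (- t))%:E).

Fixpoint nabla (R : ringType) (k : nat) (s : nat -> R) (n : nat) : R :=
  match k with
  | 0 => s n
  | k'.+1 => nabla k' s n - nabla k' s n.-1
  end.

Definition kern (R : realType) (alpha : R) (phi : R -> R) (n : nat) (s : R) : R :=
  (n%:R + 1 - s) `^ (- alpha) * phi s.

Definition sseq (R : realType) (alpha : R) (phi : R -> R) (n : nat) : R :=
  (Gamma (1 - alpha))^-1 *
  Rintegral (@lebesgue_measure R) `[0%R, 1%R] (kern alpha phi n).

(* Main.v *)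
Require Import Defs.
From HB Require Import structures.
From mathcomp Require Import all_boot all_order all_algebra.
From mathcomp Require Import all_classical all_reals all_analysis.
Import Order.TTheory GRing.Theory Num.Theory.
Local Open Scope classical_set_scope.
Local Open Scope ring_scope.

Fixpoint Nf (R : realType) (k : nat) (f : R -> R) (x : R) : R :=
  match k with 0 => f x | k'.+1 => @Nf R k' f x - @Nf R k' f (x - 1) end.
Arguments Nf {R} k f x.

Lemma Nf_derive (R : realType) (k : nat) : forall (r c x : R), k%:R < x + c ->
  is_derive x 1 (fun y => Nf k (fun z => z `^ r) (y + c)) (r * Nf k (fun z => z `^ (r-1)) (x + c)).
Proof.
elim: k => [|k IH] r c x hx /=.
  have h1 : is_derive x 1 (fun y : R => y + c) 1.
    have := is_deriveD (is_derive_id x 1) (is_derive_cst c x 1).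
    by rewrite addr0.
  have h2 := is_derive1_powR r hx.
  have := @is_derive1_comp R (fun z => z `^ r) (fun y => y + c) x _ _ h2 h1.
  by rewrite mulr1.
have e : (fun y => Nf k (fun z => z `^ r) (y + c) - Nf k (fun z => z `^ r) (y + c - 1)) =
   (fun y => Nf k (fun z => z `^ r) (y + c)) - (fun y => Nf k (fun z => z `^ r) (y + (c - 1))).
  by apply/funext => y; rewrite /= -addrA.
rewrite e mulrBr -addrA.
apply: is_deriveB.
  apply: (IH r c x); apply: lt_trans hx; rewrite ltr_nat; exact: ltnSn.
apply: (IH r (c - 1) x); by rewrite addrA ltrBrDr natr1.
Qed.

From mathcomp Require Import ring.
Lemma Nf_sign (R : realType) (k : nat) : forall (r x : R), r < 0 -> k%:R < x ->
  0 <= (-1) ^+ k * Nf k (fun z => z `^ r) x.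
Proof.
elim: k => [|k IH] r x hr hx.
  by rewrite expr0 mul1r /=; exact: powR_ge0.
have hx1 : k%:R < x - 1 by rewrite ltrBrDr natr1.
have hlt : x - 1 < x by rewrite gtrBl ltr01.
have hd : forall y, y \in `]x - 1, x[ -> is_derive y 1
    (fun y => Nf k (fun z => z `^ r) (y + 0))
    (r * Nf k (fun z => z `^ (r-1)) (y + 0)).
  move=> y hy; apply: Nf_derive; rewrite addr0; apply: lt_trans hx1 _.
  by rewrite (itvP hy).
have hdv : {in `[x - 1, x]%R, forall y, derivable (fun y => Nf k (fun z => z `^ r) (y + 0)) y 1}.
  move=> y hy.
  apply: ex_derive; apply: (@Nf_derive R k r 0 y).
  by rewrite addr0; apply: lt_le_trans hx1 _; rewrite (itvP hy).
have hc0 := derivable_within_continuous hdv.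
have [c hc E] := MVT hlt hd hc0.
rewrite /= !addr0 in E.
have e1 : x - (x - 1) = 1 by rewrite opprB addrC subrK.
rewrite e1 mulr1 in E.
rewrite /= E.
have -> : (-1) ^+ k.+1 * (r * Nf k (fun z => z `^ (r - 1)) c) =
   (- r) * ((-1) ^+ k * Nf k (fun z => z `^ (r - 1)) c) by rewrite exprS; ring.
apply: mulr_ge0; first by rewrite oppr_ge0 ltW.
apply: IH; first by rewrite subr_lt0 (lt_trans hr) // ltr01.
by apply: lt_trans hx1 _; rewrite (itvP hc).
Qed.

Lemma nablaZ (R : realType) (c : R) (f : nat -> R) k n :
  nabla k (fun m => c * f m) n = c * nabla k f n.
Proof.
elim: k n => [|k IH] n //=; by rewrite !IH mulrBr.
Qed.

Lemma Gamma_ge0 (R : realType) (x : R) : 0 <= Gamma x.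
Proof.
rewrite /Gamma fine_ge0 // integral_ge0 // => t _.
by rewrite lee_fin mulr_ge0 // ?powR_ge0 // expR_ge0.
Qed.

Lemma nabla_int (R : realType) (alpha : R) (phi : R -> R)
  (hint : forall n : nat,
      (@lebesgue_measure R).-integrable `[0%R, 1%R]
        (fun s => (kern alpha phi n s)%:E)) k : forall n,
  (@lebesgue_measure R).-integrable `[0%R, 1%R]
      (EFin \o (fun s => nabla k (fun m => kern alpha phi m s) n)) /\
  nabla k (fun m => Rintegral (@lebesgue_measure R) `[0%R, 1%R] (kern alpha phi m)) n
  = Rintegral (@lebesgue_measure R) `[0%R, 1%R] (fun s => nabla k (fun m => kern alpha phi m s) n).
Proof.
elim: k => [|k IH] n /=; first by split; [exact: hint|].
have [i1 e1] := IH n; have [i2 e2] := IH n.-1.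
split.
  apply: eq_integrable (integrableB _ i1 i2) => //.
by rewrite e1 e2 RintegralB.
Qed.

Lemma nabla_kern (R : realType) (alpha : R) (phi : R -> R) (s : R) k : forall n,
  (k <= n)%N ->
  nabla k (fun m => kern alpha phi m s) n =
  Nf k (fun z => z `^ (- alpha)) (n%:R + 1 - s) * phi s.
Proof.
elim: k => [|k IH] n hk //=.
case: n hk => [//|n] hk /=.
rewrite (IH n.+1 (leqW hk)) (IH n hk) mulrBl.
have -> : n.+1%:R + 1 - s - 1 = n%:R + 1 - s by rewrite -natr1; ring.
by [].
Qed.

Theorem lemma2p5 (R : realType) (alpha : R) (phi : R -> R)
  (ha0 : 0 < alpha) (ha1 : alpha < 1)
  (hphi : forall s : R, 0 <= s <= 1 -> 0 <= phi s)
  (hint : forall n : nat,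
      (@lebesgue_measure R).-integrable `[0%R, 1%R]
        (fun s => (kern alpha phi n s)%:E)) :
  forall k n : nat, (k <= n)%N -> 0 <= (-1) ^+ k * nabla k (sseq alpha phi) n.
Proof.
move=> k n hk.
rewrite /sseq (@nablaZ R (Gamma (1 - alpha))^-1
  (fun m => Rintegral (@lebesgue_measure R) `[0%R, 1%R] (kern alpha phi m))).
rewrite mulrCA; apply: mulr_ge0; first by rewrite invr_ge0 Gamma_ge0.
have [hi ->] := @nabla_int R alpha phi hint k n.
rewrite -RintegralZl //.
rewrite -Rintegral_itv_bndo_bndc; last first.
  apply: integrableS (integrableZl _ _ hi) => //.
  by apply: subset_itvl; rewrite bnd_simp.
apply: Rintegral_ge0 => s /=; rewrite in_itv /= => /andP[s0 s1].
rewrite nabla_kern // mulrA; apply: mulr_ge0; last by apply: hphi; rewrite s0 ltW.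
apply: Nf_sign; first by rewrite oppr_lt0.
rewrite -addrA ltr_pwDr // ?subr_gt0 //.
by rewrite ler_nat.
Qed.
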